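(* With notation as in the context, let $0\ne b\in\mathcal B_0$ be written as $b=\sum_{U\in\mathcal U}\lambda_U\chi_U$, where $\mathcal U$ is a finite family of nonempty pairwise disjoint clopen subsets of $X$ and $\lambda_U\in K\setminus\{0\}$. Then there exists $W\in\mathcal V$ with $h_W\cdot b\ne0$.
   Context: Let $X$ be an infinite, totally disconnected, compact metrizable space, $T$ a homeomorphism of $X$, $\mu$ a full (positive on nonempty open sets), ergodic, $T$-invariant Borel probability measure, $K$ a field with involution, $C_K(X)$ the $*$-algebra of locally constant functions $X\to K$, and $\mathcal A=C_K(X)\rtimes_T\mathbb Z$ the algebraic crossed product (finite sums $\sum f_it^i$, $tf=(f\circ T^{-1})t$, $(ft^i)^*=t^{-i}f^*$). Let $E$ be a nonempty clopen set, $\mathcal P$ a partition of $X\setminus E$ (finite family of nonempty pairwise disjoint clopen sets with union $X\setminus E$), $\mathcal B$ the unital $*$-subalgebra of $\mathcal A$ generated by $\{\chi_Zt:Z\in\mathcal P\}$, and $\mathcal B_0=C_K(X)\cap\mathcal B$. $\mathcal V$ is the set of nonempty sets $W=E\cap T^{-1}(Z_1)\cap\cdots\cap T^{-k+1}(Z_{k-1})\cap T^{-k}(E)$ ($k\ge1$, $Z_i\in\mathcal P$), $|W|=k$, and $h_W=\sum_{l=0}^{|W|-1}\chi_{T^l(W)}$. *)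

(* Defs.v *)
From Stdlib Require Import Reals SeqSeries.
From Stdlib Require List.
From HB Require Import structures.
From mathcomp Require Import all_boot all_order all_algebra.
Set Implicit Arguments. Unset Strict Implicit. Unset Printing Implicit Defensive.
Import GRing.Theory.

Section Topology.
Variables (X : Type) (opn : (X -> Prop) -> Prop).

Definition is_metric (d : X -> X -> R) : Prop :=
  (forall x y, Rle R0 (d x y)) /\ (forall x y, d x y = R0 <-> x = y) /\
  (forall x y, d x y = d y x) /\
  (forall x y z, Rle (d x z) (Rplus (d x y) (d y z))).

Definition metrizable : Prop :=
  exists d, is_metric d /\
    forall U, opn U <->
      (forall x, U x -> exists eps, Rlt R0 eps /\ forall y, Rlt (d x y) eps -> U y).

Definition compact_space : Prop :=
  forall (I : Type) (U : I -> X -> Prop),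
    (forall i, opn (U i)) -> (forall x, exists i, U i x) ->
    exists l : list I, forall x, exists i, List.In i l /\ U i x.

Definition connected_subset (S : X -> Prop) : Prop :=
  forall U V, opn U -> opn V -> (forall x, S x -> U x \/ V x) ->
    (forall x, ~ (S x /\ U x /\ V x)) ->
    (forall x, S x -> U x) \/ (forall x, S x -> V x).

Definition totally_disconnected : Prop :=
  forall S, connected_subset S -> forall x y, S x -> S y -> x = y.

Definition infinite_type : Prop := forall l : list X, exists x, ~ List.In x l.

Definition continuous_map (f : X -> X) : Prop :=
  forall U, opn U -> opn (fun x => U (f x)).

Definition homeo (T Tinv : X -> X) : Prop :=
  cancel T Tinv /\ cancel Tinv T /\ continuous_map T /\ continuous_map Tinv.

Definition clopen (Z : X -> bool) : Prop :=
  opn (fun x => Z x) /\ opn (fun x => ~~ Z x).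

Inductive borel : (X -> Prop) -> Prop :=
| borel_open U : opn U -> borel U
| borel_compl A : borel A -> borel (fun x => ~ A x)
| borel_union (A : nat -> X -> Prop) :
    (forall n, borel (A n)) -> borel (fun x => exists n, A n x).

(* Borel probability measure (values on non-Borel sets are irrelevant) *)
Definition prob_measure (mu : (X -> Prop) -> R) : Prop :=
  (forall A B, (forall x, A x <-> B x) -> mu A = mu B) /\
  (forall A, borel A -> Rle R0 (mu A)) /\
  mu (fun _ => True) = R1 /\
  (forall A : nat -> X -> Prop, (forall n, borel (A n)) ->
     (forall n m x, n <> m -> A n x -> A m x -> False) ->
     Un_cv (fun N => sum_f_R0 (fun n => mu (A n)) N) (mu (fun x => exists n, A n x))).

Definition mu_invariant (T : X -> X) (mu : (X -> Prop) -> R) : Prop :=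
  forall A, borel A -> mu (fun x => A (T x)) = mu A.

Definition is_ergodic (T : X -> X) (mu : (X -> Prop) -> R) : Prop :=
  forall A, borel A -> (forall x, A (T x) <-> A x) -> mu A = R0 \/ mu A = R1.

Definition full_measure (mu : (X -> Prop) -> R) : Prop :=
  forall U, opn U -> (exists x, U x) -> Rlt R0 (mu U).

Definition partition_of (E : X -> bool) (P : seq (X -> bool)) : Prop :=
  (forall Z, List.In Z P -> clopen Z /\ exists x, Z x) /\
  (forall Z1 Z2, List.In Z1 P -> List.In Z2 P -> Z1 <> Z2 ->
     forall x, ~~ (Z1 x && Z2 x)) /\
  (forall x, ~~ E x <-> exists Z, List.In Z P /\ Z x).

End Topology.

Section CrossedProduct.
Local Open Scope ring_scope.
Variables (X : Type) (opn : (X -> Prop) -> Prop) (K : fieldType)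
          (conj : K -> K) (T Tinv : X -> X).

Definition chi (Z : X -> bool) (x : X) : K := if Z x then 1 else 0.

Definition locally_constant (f : X -> K) : Prop :=
  forall x, exists U, opn U /\ U x /\ forall y, U y -> f y = f x.

Definition Tpow (n : int) : X -> X :=
  match n with Posz k => iter k T | Negz k => iter k.+1 Tinv end.

(* An element of the crossed product is written as a finite formal sum of
   monomials f t^i, encoded as a list of pairs (i, f).  Two such lists
   denote the same element iff they have the same coefficients [coef]. *)
Definition cp := seq (int * (X -> K)).

Definition coef (a : cp) (n : int) (x : X) : K :=
  \sum_(m <- a | m.1 == n) m.2 x.

Definition cp_add (a b : cp) : cp := a ++ b.
Definition cp_scale (c : K) (a : cp) : cp := [seq (m.1, fun x => c * m.2 x) | m <- a].
Definition cp_one : cp := [:: (Posz 0, fun _ => 1)].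
(* (f t^i)(g t^j) = f (g o T^-i) t^(i+j) *)
Definition cp_mul (a b : cp) : cp :=
  [seq (m.1 + n.1, fun x => m.2 x * n.2 (Tpow (- m.1) x)) | m <- a, n <- b].
(* (f t^i)^* = t^-i f^* = (f^* o T^i) t^-i *)
Definition cp_star (a : cp) : cp :=
  [seq (- m.1, fun x => conj (m.2 (Tpow m.1 x))) | m <- a].

Inductive Bgen (P : seq (X -> bool)) : cp -> Prop :=
| Bgen_gen Z : List.In Z P -> Bgen P [:: (Posz 1, chi Z)]
| Bgen_one : Bgen P cp_one
| Bgen_add a b : Bgen P a -> Bgen P b -> Bgen P (cp_add a b)
| Bgen_scale c a : Bgen P a -> Bgen P (cp_scale c a)
| Bgen_mul a b : Bgen P a -> Bgen P b -> Bgen P (cp_mul a b)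
| Bgen_star a : Bgen P a -> Bgen P (cp_star a).

Definition inB (P : seq (X -> bool)) (a : cp) : Prop :=
  exists l, Bgen P l /\ forall n x, coef l n x = coef a n x.

Definition inB0 (P : seq (X -> bool)) (b : X -> K) : Prop :=
  locally_constant b /\ inB P [:: (Posz 0, b)].

(* W = E \cap T^-1 Z_1 \cap ... \cap T^-(k-1) Z_(k-1) \cap T^-k E,
   encoded by the word zs = [:: Z_1; ...; Z_(k-1)], so |W| = k = size zs + 1 *)
Definition Wset (E : X -> bool) (zs : seq (X -> bool)) (x : X) : bool :=
  [&& E x,
      [forall i : 'I_(size zs), nth (fun _ => false) zs i (Tpow (Posz i.+1) x)]
    & E (Tpow (Posz (size zs).+1) x)].

Definition inV (E : X -> bool) (P : seq (X -> bool)) (zs : seq (X -> bool)) : Prop :=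
  (forall Z, List.In Z zs -> List.In Z P) /\ exists x, Wset E zs x.

(* h_W = sum_(l < |W|) chi_(T^l W);  x \in T^l W  iff  T^-l x \in W *)
Definition hW (E : X -> bool) (zs : seq (X -> bool)) (x : X) : K :=
  \sum_(l < (size zs).+1) chi (Wset E zs) (Tpow (- Posz l) x).

End CrossedProduct.

(* Main.v *)
Require Import Defs.
From Stdlib Require Import Reals Lra Classical FunctionalExtensionality PropExtensionality.
From Stdlib Require List.
From HB Require Import structures.
From mathcomp Require Import all_boot all_order all_algebra zify.
Import GRing.Theory.
Set Implicit Arguments. Unset Strict Implicit.
Open Scope R_scope.

Lemma borel_ext (X : Type) opn (A B : X -> Prop) :
  borel opn A -> (forall x, A x <-> B x) -> borel opn B.
Proof.
move=> hA hAB.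
have -> : B = A by apply: functional_extensionality => x; apply: propositional_extensionality; split => /hAB.
done.
Qed.

Lemma borel_not (X : Type) opn (A : X -> Prop) : borel opn A -> borel opn (fun x => ~ A x).
Proof. exact: borel_compl. Qed.

Lemma borel_or (X : Type) opn (A B : X -> Prop) :
  borel opn A -> borel opn B -> borel opn (fun x => A x \/ B x).
Proof.
move=> hA hB.
have h := @borel_union X opn (fun n => if n is 0 then A else B).
apply: borel_ext; first by apply: h; case.
move=> x; split; first by case=> [[|n]] ?; [left|right].
by case=> ?; [exists 0%N | exists 1%N].
Qed.

Lemma borel_and (X : Type) opn (A B : X -> Prop) :
  borel opn A -> borel opn B -> borel opn (fun x => A x /\ B x).
Proof.
move=> hA hB.
apply: borel_ext; first by apply/borel_not/borel_or; [exact: borel_not hA | exact: borel_not hB].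
move=> x; split; last by move=> [? ?] [|].
move=> h; split; apply: NNPP => hn; apply: h; [left|right]; exact: hn.
Qed.

Lemma borel_ex (X : Type) opn (A : nat -> X -> Prop) :
  (forall n, borel opn (A n)) -> borel opn (fun x => exists n, A n x).
Proof. exact: borel_union. Qed.

Lemma borel_pre (X : Type) opn (f : X -> X) (A : X -> Prop) :
  continuous_map opn f -> borel opn A -> borel opn (fun x => A (f x)).
Proof.
move=> hf; elim=> [U hU|B _ ih|F _ ih].
- exact: borel_open (hf U hU).
- exact: borel_compl ih.
- exact: borel_union ih.
Qed.

Lemma borel_iter (X : Type) opn (f : X -> X) n : continuous_map opn f ->
  forall A : X -> Prop, borel opn A -> borel opn (fun x => A (iter n f x)).
Proof.
move=> hf; elim: n => [|n ih] A hA //.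
exact: (ih (fun z => A (f z)) (borel_pre hf hA)).
Qed.

Lemma const_cv (c l : R) : Un_cv (fun N => sum_f_R0 (fun _ => c) N) l -> c = R0.
Proof.
move=> h.
have hs : forall N, sum_f_R0 (fun _ => c) N.+1 = Rplus (sum_f_R0 (fun _ => c) N) c by [].
apply: NNPP => hc.
have hpos : Rlt R0 (Rabs c) by apply: Rabs_pos_lt.
have [N hN] := h (Rabs c / 2) ltac:(lra).
have h1 := hN N (le_n N).
have h2 := hN N.+1 (le_S _ _ (le_n N)).
rewrite hs in h2.
move: h1 h2; rewrite /R_dist => h1 h2.
move: (sum_f_R0 (fun _ => c) N) h1 h2 => s h1 h2.
move: h1 h2 hpos; clear; split_Rabs; lra.
Qed.

Lemma borel_empty (X : Type) opn (Z : X -> Prop) : borel opn Z -> borel opn (fun _ => False).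
Proof.
move=> hZ; apply: borel_ext; first exact: borel_and hZ (borel_not hZ).
by move=> x; split=> [[]|].
Qed.

Lemma mu_empty (X : Type) opn (mu : (X -> Prop) -> R) (Z : X -> Prop) :
  prob_measure opn mu -> borel opn Z -> mu (fun _ => False) = 0.
Proof.
move=> [hext [hpos [h1 hadd]]] hZ.
have := hadd (fun _ _ => False) (fun _ => borel_empty hZ) (fun _ _ _ _ f _ => f).
exact: const_cv.
Qed.

Lemma ev_const (u : nat -> R) l c : Un_cv u l -> (forall N, (1 <= N)%nat -> u N = c) -> l = c.
Proof.
move=> hu hc; apply: (UL_sequence u) => //.
move=> eps he; exists 1%nat => n hn; rewrite hc; last by apply/leP.
by rewrite /R_dist /Rminus Rplus_opp_r Rabs_R0.

Qed.

Lemma mu_add2 (X : Type) opn (mu : (X -> Prop) -> R) (A B : X -> Prop) :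
  prob_measure opn mu -> borel opn A -> borel opn B -> (forall x, A x -> B x -> False) ->
  mu (fun x => A x \/ B x) = mu A + mu B.
Proof.
move=> pm hA hB hd; have [hext [hpos [h1 hadd]]] := pm.
pose F n := match n with 0%nat => A | 1%nat => B | _ => fun _ : X => False end.
have hF : forall n, borel opn (F n) by case=> [|[|n]] //=; exact: borel_empty hA.
have hdF : forall n m x, n <> m -> F n x -> F m x -> False.
  move=> n m x; case: n => [|[|n]]; case: m => [|[|m]] /= hnm;
  try (by case: hnm); try (by move=> a b; exact: hd a b); try (by move=> a b; exact: hd b a); tauto.
have := hadd F hF hdF.
have -> : mu (fun x => exists n, F n x) = mu (fun x => A x \/ B x).
  apply: hext => x; split; first by case=> [[|[|n]]] /= h; [left|right|case: h].
  by case=> h; [exists 0%nat | exists 1%nat].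
move=> hcv; apply: (ev_const hcv) => N; case: N => // N _.
elim: N => [|N ih] //=.
by rewrite /= in ih; rewrite ih (mu_empty pm hA); ring.
Qed.

Lemma mu_mono (X : Type) opn (mu : (X -> Prop) -> R) (A B : X -> Prop) :
  prob_measure opn mu -> borel opn A -> borel opn B -> (forall x, A x -> B x) ->
  Rle (mu A) (mu B).
Proof.
move=> pm hA hB hAB; have [hext [hpos [h1 hadd]]] := pm.
have hC : borel opn (fun x => B x /\ ~ A x) by apply: borel_and hB (borel_not hA).
have e : mu B = mu (fun x => A x \/ (B x /\ ~ A x)).
  apply: hext => x; split; first by move=> hb; case: (classic (A x)) => ?; [left|right].
  by case=> [/hAB|[]].
rewrite e (mu_add2 pm hA hC); last by move=> x ? [].
have := hpos _ hC; lra.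
Qed.

Lemma mu_sub2 (X : Type) opn (mu : (X -> Prop) -> R) (A B : X -> Prop) :
  prob_measure opn mu -> borel opn A -> borel opn B ->
  Rle (mu (fun x => A x \/ B x)) (mu A + mu B).
Proof.
move=> pm hA hB; have [hext [hpos [h1 hadd]]] := pm.
have hC : borel opn (fun x => B x /\ ~ A x) by apply: borel_and hB (borel_not hA).
have e : mu (fun x => A x \/ B x) = mu (fun x => A x \/ (B x /\ ~ A x)).
  apply: hext => x; split; first by case=> h; [left| case: (classic (A x)) => ?; [left|right]].
  by case=> [|[]]; [left|right].
rewrite e (mu_add2 pm hA hC); last by move=> x ? [].
have := mu_mono pm hC hB (fun x (h : B x /\ ~ A x) => proj1 h); lra.
Qed.

Lemma iterK (X : Type) (f g : X -> X) : cancel g f ->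
  forall a y, iter a f (iter a g y) = y.
Proof. by move=> hK; elim=> [|a ih] y //; rewrite [iter a.+1 f _]iterSr iterS hK ih. Qed.

Lemma iterKD (X : Type) (f g : X -> X) : cancel g f ->
  forall a b y, iter (a + b)%N f (iter a g y) = iter b f y.
Proof. by move=> hK a b y; rewrite addnC iterD iterK. Qed.

Lemma iterKD' (X : Type) (f g : X -> X) : cancel g f ->
  forall a b y, iter a f (iter (a + b)%N g y) = iter b g y.
Proof. by move=> hK a b y; rewrite iterD iterK. Qed.

Lemma borel_Npl (X : Type) opn (S : X -> X) (E : X -> bool) :
  continuous_map opn S -> opn (fun x => E x) ->
  borel opn (fun x => forall n, ~ E (iter n.+1 S x)).
Proof.
move=> hS hE.
apply: borel_ext.
  apply: borel_not; apply: borel_ex => n.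
  exact: (borel_iter n.+1 hS (borel_open hE)).
move=> x /=; split; first by move=> h n hn; apply: h; exists n.
by move=> h [n hn]; exact: h n hn.
Qed.

Lemma borel_I (X : Type) opn (S Sinv : X -> X) (E : X -> bool) :
  continuous_map opn S -> continuous_map opn Sinv -> opn (fun x => E x) ->
  borel opn (fun x => exists n, E (iter n S x) \/ E (iter n Sinv x)).
Proof.
move=> hS hSi hE; apply: borel_ex => n; apply: borel_or.
  exact: (borel_iter n hS (borel_open hE)).
exact: (borel_iter n hSi (borel_open hE)).
Qed.

Lemma never_return_null (X : Type) opn (mu : (X -> Prop) -> R) (S Sinv : X -> X)
  (E : X -> bool) :
  prob_measure opn mu -> cancel S Sinv -> cancel Sinv S ->
  continuous_map opn S -> continuous_map opn Sinv ->
  (forall A, borel opn A -> mu (fun x => A (S x)) = mu A) ->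
  opn (fun x => E x) ->
  mu (fun x => ~ exists n, E (iter n S x) \/ E (iter n Sinv x)) = 0 ->
  mu (fun x => forall n, ~ E (iter n.+1 S x)) = 0.
Proof.
move=> pm hSK hKS hS hSi hinv hE hI.
have [hext [hpos [h1 hadd]]] := pm.
set Npl := (fun x => forall n, ~ E (iter n.+1 S x)).
have bNpl : borel opn Npl by exact: borel_Npl.
have bE : borel opn (fun x => E x) by exact: borel_open.
pose W0 := fun x => E x /\ Npl x.
have bW0 : borel opn W0 by exact: borel_and.
pose A n := fun x => W0 (iter n Sinv x).
have bA : forall n, borel opn (A n) by move=> n; rewrite /A; exact: (borel_iter n hSi bW0).
have muA : forall n, mu (A n) = mu W0.
  elim=> [|n ih] //; rewrite -ih -(hinv _ (bA n.+1)); apply: hext => x.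
  by rewrite /A /= -iterS iterSr hSK.
have dA : forall n m x, n <> m -> A n x -> A m x -> False.
  have key : forall n d x, A n x -> A (d.+1 + n)%N x -> False.
    move=> n d x [hE1 _] [_ hN]; apply: (hN d).
    by rewrite iterKD'.
  move=> n m x hnm hn hm; case: (ltngtP n m) => [lt|lt|eq].
  - by move: hm; rewrite -(subnK lt) -addSnnS; exact: key.
  - by move: hn; rewrite -(subnK lt) -addSnnS; exact: key.
  - by move: hnm; rewrite eq.
have hW0 : mu W0 = 0.
  have := hadd A bA dA.
  have -> : (fun n => mu (A n)) = (fun _ => mu W0) by apply: functional_extensionality.
  exact: const_cv.
have hU : mu (fun x => exists n, A n x) = 0.
  have := hadd A bA dA.
  have -> : (fun n => mu (A n)) = (fun _ => 0) by apply: functional_extensionality => n; rewrite muA.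
  move=> hcv; apply: (ev_const hcv) => N _; elim: N => [|N ih] //=; rewrite ih; ring.
have bnI : borel opn (fun x => ~ exists n, E (iter n S x) \/ E (iter n Sinv x)).
  exact: borel_not (borel_I hS hSi hE).
have bU : borel opn (fun x => exists n, A n x) by exact: borel_ex.
have hle := mu_sub2 pm bnI bU.
have hmono : Rle (mu Npl) (mu (fun x => (~ exists n, E (iter n S x) \/ E (iter n Sinv x)) \/ exists n, A n x)).
  apply: (mu_mono pm bNpl (borel_or bnI bU)) => x hx.
  case: (classic (exists n, E (iter n S x) \/ E (iter n Sinv x))) => hIx; last by left.
  right; case: hIx => n [hf|hb].
    case: n hf => [|n] hf; last by case: (hx n).
    by exists 0%N; split.
  have [j Pj minj] := @find_ex_minn (fun j => E (iter j Sinv x)) (ex_intro _ n hb).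
  exists j; split => // k hk.
  case: (leqP k.+1 j) => hkj.
    have e : iter k.+1 S (iter j Sinv x) = iter (j - k.+1) Sinv x.
      have -> : j = (k.+1 + (j - k.+1))%N by lia.
      by rewrite iterKD' // addKn.
    move: hk; rewrite e => hk; have := minj _ hk; lia.
  have e : iter k.+1 S (iter j Sinv x) = iter (k - j).+1 S x.
    have -> : k.+1 = (j + (k - j).+1)%N by lia.
    exact: iterKD.
  move: hk; rewrite e; exact: (hx (k - j)%N).
have := hpos _ bNpl; rewrite hI hU in hle; lra.
Qed.

Close Scope R_scope.
Local Open Scope ring_scope.

Lemma Tpow_neg (X : Type) (T Tinv : X -> X) (l : nat) : Tpow T Tinv (- Posz l) = iter l Tinv.
Proof. by case: l. Qed.







Lemma In_nth (A : Type) (d : A) (s : seq A) i : (i < size s)%N -> List.In (nth d s i) s.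
Proof. by elim: s i => [|a s ih] [|i] //= hi; [left|right; apply: ih]. Qed.

Lemma has_In (A : Type) (p : pred A) (s : seq A) z : List.In z s -> p z -> has p s.
Proof. by elim: s => [|a s ih] //= [->->|/ih h /h ->]; rewrite ?orbT. Qed.

Lemma In_map_iota (B : Type) (f : nat -> B) m n z :
  List.In z (map f (iota m n)) -> exists i, (m <= i < m + n)%N /\ z = f i.
Proof.
elim: n m => [|n ih] m //= [<-|/ih [i [hi ->]]].
  by exists m; split => //; lia.
by exists i; split => //; lia.
Qed.

Lemma comb (X : Type) opn (K : fieldType) (T Tinv : X -> X) (E : X -> bool)
  (P : seq (X -> bool)) (y : X) :
  cancel T Tinv -> cancel Tinv T -> partition_of opn E P ->
  (exists n, E (iter n.+1 T y)) -> (exists m, E (iter m Tinv y)) ->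
  exists zs, inV T Tinv E P zs /\ hW K T Tinv E zs y = 1.
Proof.
move=> hTK hKT [hPc [hPd hPu]] exq exp.
have [p Pp minp] := @find_ex_minn (fun j => E (iter j Tinv y)) exp.
have [q Pq minq] := @find_ex_minn (fun n => E (iter n.+1 T y)) exq.
set x := iter p Tinv y.
have Fout : forall i, (0 < i < p + q.+1)%N -> ~~ E (iter i T x).
  move=> i hi; apply/negP => hE.
  case: (leqP i p) => hip.
    have e : iter i T x = iter (p - i) Tinv y.
      rewrite /x; have -> : p = (i + (p - i))%N by lia.
      by rewrite iterKD' // addKn.
    by move: hE; rewrite e => /minp; lia.
  have e : iter i T x = iter (i - p).-1.+1 T y.
    rewrite /x; have -> : i = (p + (i - p).-1.+1)%N by lia.
    by rewrite iterKD // addKn.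
  by move: hE; rewrite e => /minq; lia.
have Fend : E (iter (p + q.+1) T x) by rewrite /x iterKD.
pose pick z := nth (fun _ => false) P (find (fun Z : X -> bool => Z z) P).
have pick_ok : forall z, ~~ E z -> List.In (pick z) P /\ pick z z.
  move=> z /hPu [Z [hZ hZz]].
  have hh : has (fun Z : X -> bool => Z z) P by apply: has_In hZ _.
  split; first by apply: In_nth; rewrite -has_find.
  exact: (@nth_find _ (fun _ => false) (fun Z : X -> bool => Z z)).
pose zs := [seq pick (iter i.+1 T x) | i <- iota 0 (p + q)].
have szs : size zs = (p + q)%N by rewrite size_map size_iota.
have nzs : forall i, (i < p + q)%N -> nth (fun _ => false) zs i = pick (iter i.+1 T x).
  by move=> i hi; rewrite (nth_map 0%N) ?size_iota // nth_iota.
have Wx : Wset T Tinv E zs x.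
  apply/and3P; split => //.
    apply/forallP => i; have hi : (i < p + q)%N by rewrite -szs ltn_ord.
    rewrite nzs //; apply: (pick_ok _ (Fout _ _)).2; lia.
  by move: Fend; rewrite szs addnS.
exists zs; split.
  split; last by exists x.
  move=> Z hZ; have [i [hi ->]] := In_map_iota hZ.
  apply: (pick_ok _ (Fout _ _)).1; lia.
rewrite /hW szs.
have hp : (p < (p + q).+1)%N by lia.
rewrite (bigD1 (Ordinal hp)) //= big1 ?addr0.
  by rewrite Tpow_neg /chi -/x Wx.
move=> l hl; rewrite Tpow_neg /chi.
case hw: (Wset T Tinv E zs (iter l Tinv y)) => //.
exfalso; move: hw => /and3P [hE1 /forallP hf _].
have hlp : l != p :> nat by apply/eqP => e; move/eqP: hl; apply; apply: val_inj.
case: (ltngtP l p) hlp => [hlt _|hgt _|e]; last by [].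
  by have := minp _ hE1; lia.
have hd : ((l - p).-1 < size zs)%N by rewrite szs; have := ltn_ord l; lia.
have := hf (Ordinal hd); rewrite /= nzs; last by have := ltn_ord l; lia.
have e : iter (l - p).-1.+1 T (iter l Tinv y) = x.
  rewrite /x; have el : nat_of_ord l = ((l - p).-1.+1 + p)%N by lia.
  by rewrite {2}el iterKD'.
rewrite -iterS e.
have hr : (0 < (l - p).-1.+1 < p + q.+1)%N by have := ltn_ord l; lia.
have [hin hpz] := pick_ok (iter (l - p).-1.+1 T x) (Fout _ hr).
move=> hZx.
have : ~~ E x by apply/hPu; exists (pick (iter (l - p).-1.+1 T x)).
by rewrite /x Pp.
Qed.

Unset Implicit Arguments.

Theorem lemma3p11 (X : Type) (opn : (X -> Prop) -> Prop) (T Tinv : X -> X)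
  (mu : (X -> Prop) -> R) (K : fieldType) (conj : {rmorphism K -> K})
  (E : X -> bool) (P : seq (X -> bool)) (b : X -> K)
  (Us : seq (K * (X -> bool))) :
  metrizable opn -> compact_space opn -> totally_disconnected opn -> infinite_type X ->
  homeo opn T Tinv ->
  prob_measure opn mu -> mu_invariant opn T mu -> is_ergodic opn T mu -> full_measure opn mu ->
  involutive conj ->
  clopen opn E -> (exists x, E x) -> partition_of opn E P ->
  inB0 opn conj T Tinv P b -> (exists x, b x != 0) ->
  (forall u, List.In u Us -> [/\ clopen opn u.2, exists x, u.2 x & u.1 != 0]) ->
  (forall i j, (i < size Us)%N -> (j < size Us)%N -> i <> j ->
     forall x, ~~ ((nth (0, fun _ => false) Us i).2 x &&
                   (nth (0, fun _ => false) Us j).2 x)) ->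
  (forall x, b x = \sum_(u <- Us) u.1 * chi K u.2 x) ->
  exists zs, inV T Tinv E P zs /\ exists x, hW K T Tinv E zs x * b x != 0.
Proof.
move=> _ _ _ _ [hTK [hKT [cT cTi]]] pm hinv herg hfull _ [hEo _] [xE hxE] hP
  [hlc _] [x0 hx0] _ _ _.
have [hext [hpos [h1 hadd]]] := pm.
have [V [hVo [hVx0 hVb]]] := hlc x0.
have bE : borel opn (fun x => E x) by exact: borel_open.
have bV : borel opn V by exact: borel_open.
have muE : Rlt R0 (mu (fun x => E x)) by apply: hfull => //; exists xE.
have muV : Rlt R0 (mu V) by apply: hfull => //; exists x0.
set I := fun x => exists n, E (iter n T x) \/ E (iter n Tinv x).
have bI : borel opn I by exact: borel_I.
have bnI : borel opn (fun x => ~ I x) by exact: borel_not.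
have hIinv : forall x, I (T x) <-> I x.
  move=> x; split.
    case=> [[|n] [h|h]].
    - by exists 1%N; left.
    - by exists 1%N; left.
    - by exists n.+2; left; rewrite iterSr.
    - by exists n; right; rewrite iterSr hTK in h.
  case=> [[|n] [h|h]].
  - by exists 1%N; right; rewrite /= hTK.
  - by exists 1%N; right; rewrite /= hTK.
  - by exists n; left; rewrite -iterSr.
  - by exists n.+2; right; rewrite iterSr hTK.
have muI : mu I = R1.
  have := mu_mono pm bE bI (fun x hx => ex_intro _ 0%N (or_introl hx)).
  case: (herg I bI hIinv) => ->; lra.
have munI : mu (fun x => ~ I x) = R0.
  have := mu_add2 pm bI bnI (fun x a b => b a).
  have -> : mu (fun x => I x \/ ~ I x) = mu (fun _ => True).
    by apply: hext => x; split => // _; apply: classic.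
  rewrite h1 muI; lra.
have hinvTi : forall A, borel opn A -> mu (fun x => A (Tinv x)) = mu A.
  move=> A hA; rewrite -(hinv _ (borel_pre cTi hA)); apply: hext => x.
  by rewrite hTK.
have N1 := never_return_null pm hTK hKT cT cTi hinv hEo munI.
have N2 : mu (fun x => forall n, ~ E (iter n.+1 Tinv x)) = R0.
  apply: (never_return_null pm hKT hTK cTi cT hinvTi hEo).
  apply: eq_trans munI; apply: hext => x; split => h [n hn]; apply: h; exists n; tauto.
have [y [hVy [hf hb]]] : exists y, V y /\ (exists n, E (iter n.+1 T y)) /\
                                    (exists m, E (iter m Tinv y)).
  apply: NNPP => hno.
  have b1 := borel_Npl cT hEo.
  have b2 := borel_Npl cTi hEo.
  have hm := mu_mono pm bV (borel_or b1 b2).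
  have hs := mu_sub2 pm b1 b2.
  suff hsub : forall x, V x -> (forall n, ~ E (iter n.+1 T x)) \/ (forall n, ~ E (iter n.+1 Tinv x)).
    have := hm hsub; rewrite N1 N2 in hs; lra.
  move=> x hx; apply: NNPP => hn; apply: hno; exists x; split => //.
  split; apply: NNPP => hne; apply: hn; [left|right] => n hen.
    by apply: hne; exists n.
  by apply: hne; exists n.+1.
have [zs [hzs hh]] := comb K hTK hKT hP hf hb.
exists zs; split => //; exists y.
by rewrite hh mul1r hVb.
Qed.
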